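(* Let $p$ be a prime number and let $x,y,z\in\mathbb{N}$ with $x\le y\le z$ satisfy $\frac{4}{p}=\frac{1}{x}+\frac{1}{y}+\frac{1}{z}$. Then $\gcd(y,p^2)\ne p^2$ and $\gcd(z,p^2)\ne p^2$.
   Context: $\mathbb{N}$ denotes the positive integers. *)

(* Defs.v *)
From mathcomp Require Import all_boot all_order all_algebra.

(* Main.v *)
Require Import Defs.
From mathcomp Require Import all_boot all_order all_algebra.
From mathcomp Require Import zify ring.
Import GRing.Theory Num.Theory.
Local Open Scope ring_scope.

Lemma bounds (p x y z : nat) : (0 < x)%N -> (0 < y)%N -> (0 < z)%N ->
  (x <= y)%N -> (y <= z)%N ->
  (4 * x * y * z = p * (y * z+x * z+x * y))%N ->
  [/\ (p < 4 * x)%N, (4 * x <= 3 * p)%N & (4 * x * y <= p * (2 * x+y))%N].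
Proof.
move=> x0 y0 z0 xy yz E.
have h1 : (x * y <= y * z)%N by nia.
have h2 : (x * z <= y * z)%N by nia.
split.
- have : (p * (y * z) < 4 * x * (y * z))%N by nia.
  rewrite ltn_pmul2r //; nia.
- have : (4 * x * (y * z) <= 3 * p * (y * z))%N by nia.
  rewrite leq_pmul2r //; nia.
- have h3 : (x * y <= x * z)%N by nia.
  have : (4 * x * y * z <= p * (2 * x+y) * z)%N by nia.
  by rewrite leq_pmul2r.
Qed.

Lemma caseY_core (p x k : nat) : (1 < p)%N -> (0 < k)%N -> (p < 4 * x)%N -> (4 * x <= 3 * p)%N ->
  (4 * x * (k * p ^ 2) <= p * (2 * x + k * p ^ 2))%N -> False.
Proof.
move=> p1 k0 b1 b2 b3.
have b4 : (4 * x * p * k <= 2 * x + p * p * k)%N.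
  rewrite -(@leq_pmul2l p) ?(ltn_trans _ p1) //.
  have -> : (p * (4 * x * p * k) = 4 * x * (k * p ^ 2))%N by ring.
  have -> : (p * (2 * x + p * p * k) = p * (2 * x + k * p ^ 2))%N by ring.
  exact: b3.
have b5 : ((p + 1) * (p * k) <= 4 * x * (p * k))%N by rewrite leq_mul2r addn1 b1 orbT.
have b6 : (p * (2 * k) <= p * 3)%N by lia.
rewrite leq_pmul2l ?(ltn_trans _ p1) // in b6.
have k1 : k = 1%N by lia.
subst k.
have b7 : ((p + 1) * (2 * p - 1) <= 4 * x * (2 * p - 1))%N by rewrite leq_mul2r addn1 b1 orbT.
nia.
Qed.

Lemma caseZ_core (p x y c : nat) : prime p -> (0 < x)%N -> (4 * x <= 3 * p)%N ->
  (4 * x * y * (c * p ^ 2) = p * (y * (c * p ^ 2) + x * (c * p ^ 2) + x * y))%N -> (p ^ 2 %| y)%N.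
Proof.
move=> pp x0 b2 E.
have p1 := prime_gt1 pp.
have p0 : (0 < p)%N by apply: ltn_trans p1.
have px : ~~ (p %| x)%N.
  apply/negP => /dvdn_leq => /(_ x0); lia.
have E1 : (4 * x * y * p * c = p * (p * c * (y + x)) + x * y)%N.
  apply/eqP; rewrite -(eqn_pmul2l p0); apply/eqP.
  transitivity (4 * x * y * (c * p ^ 2))%N; first ring.
  rewrite E; ring.
have : (p %| x * y)%N.
  have h : (p %| p * (p * c * (y + x)))%N by apply: dvdn_mulr.
  by rewrite -(dvdn_addr (x * y) h) -E1; apply: dvdn_mulr; apply: dvdn_mull.
rewrite Euclid_dvdM // (negbTE px) /= => /dvdnP [d hd].
subst y.
have E2 : (4 * x * d * p * c = p * (c * (x + p * d)) + x * d)%N.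
  apply/eqP; rewrite -(eqn_pmul2l p0); apply/eqP.
  transitivity (4 * x * (d * p) * p * c)%N; first ring.
  rewrite E1; ring.
have : (p %| x * d)%N.
  have h : (p %| p * (c * (x + p * d)))%N by apply: dvdn_mulr.
  by rewrite -(dvdn_addr (x * d) h) -E2; apply: dvdn_mulr; apply: dvdn_mull.
rewrite Euclid_dvdM // (negbTE px) /= => /dvdnP [e he].
subst d.
apply/dvdnP; exists e; ring.
Qed.

Lemma caseY (p x y z : nat) : prime p -> (0 < x)%N -> (0 < y)%N -> (0 < z)%N ->
  (x <= y)%N -> (y <= z)%N ->
  (4 * x * y * z = p * (y * z + x * z + x * y))%N -> ~ (p ^ 2 %| y)%N.
Proof.
move=> pp x0 y0 z0 xy yz E /dvdnP [k hk].
have [b1 b2 b3] := bounds p x y z x0 y0 z0 xy yz E.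
subst y.
have k0 : (0 < k)%N by move: y0; rewrite muln_gt0 => /andP[].
exact: (caseY_core p x k (prime_gt1 pp) k0 b1 b2 b3).
Qed.

Lemma caseZ (p x y z : nat) : prime p -> (0 < x)%N -> (0 < y)%N -> (0 < z)%N ->
  (x <= y)%N -> (y <= z)%N ->
  (4 * x * y * z = p * (y * z + x * z + x * y))%N -> (p ^ 2 %| z)%N -> (p ^ 2 %| y)%N.
Proof.
move=> pp x0 y0 z0 xy yz E /dvdnP [c hc].
have [b1 b2 b3] := bounds p x y z x0 y0 z0 xy yz E.
subst z.
exact: (caseZ_core p x y c pp x0 b2 E).
Qed.

Theorem lemma3 (p x y z : nat) :
  prime p -> (0 < x)%N -> (0 < y)%N -> (0 < z)%N ->
  (x <= y)%N -> (y <= z)%N ->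
  (4%:R / p%:R : rat) = 1 / x%:R + 1 / y%:R + 1 / z%:R ->
  gcdn y (p ^ 2) <> (p ^ 2)%N /\ gcdn z (p ^ 2) <> (p ^ 2)%N.
Proof.
move=> pp x0 y0 z0 xy yz H.
have p0 : (0 < p)%N by apply: ltn_trans (prime_gt1 pp).
have E : (4 * x * y * z = p * (y * z+x * z+x * y))%N.
  apply/eqP; rewrite -(eqr_nat rat) -subr_eq0.
  have nz : forall n : nat, (0 < n)%N -> (n%:R : rat) != 0.
    by move=> n n0; rewrite pnatr_eq0 -lt0n.
  have -> : ((4 * x * y * z)%:R - (p * (y * z+x * z+x * y))%:R : rat)
     = p%:R * x%:R * y%:R * z%:R * (4%:R / p%:R - (1 / x%:R + 1 / y%:R + 1 / z%:R)).
    rewrite !natrM !natrD; field.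
    by rewrite !nz.
  by rewrite H subrr mulr0.
have cy := caseY p x y z pp x0 y0 z0 xy yz E.
split; move/gcdn_idPr => h.
  exact: cy.
exact/cy/(caseZ p x y z pp x0 y0 z0 xy yz E).
Qed.
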